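(* Assume $n\ge 3t+1$. In any execution of COOL, if $\eta^{[1]}=2$ then $\eta^{[3]}\le 1$.
   Context: Setting. $n$ processors indexed by $[1:n]$, pairwise joined by reliable private synchronous channels; recipients know senders. At most $t$ processors are dishonest, controlled by an adversary who may make them deviate arbitrarily (missing values replaced by a fixed default); the others are honest. Processor $i$ holds an $\ell$-bit initial message $\boldsymbol w_i$. $\phi$ is a default value different from every $\ell$-bit message. Logarithms are base 2. Code. $k=\lfloor t/5\rfloor+1$, $c=\lceil \max\{\ell,(t/5+1)\log(n+1)\}/k\rceil$. Messages are zero-padded to $kc$ bits and viewed in $GF(2^c)^k$. Integers in $[1:n]$ are identified with distinct nonzero elements of $GF(2^c)$; $\boldsymbol h_i\in GF(2^c)^k$ has entries $h_{i,j}=\prod_{p\in[1:k],\,p\ne j}\frac{i-p}{j-p}$ (field arithmetic). COOL, Phases 1–3 (honest processor $i$). Initialization: updated message $\boldsymbol w^{(i)}:=\boldsymbol w_i$, $y^{(i)}_j:=\boldsymbol h_j^{\mathsf T}\boldsymbol w_i$, $u_i(i):=1$. Phase 1. (a) Send $(y^{(i)}_j,y^{(i)}_i)$ to each $j\ne i$. (b) For $j\ne i$, link indicator $u_i(j):=1$ if the pair received from $j$ equals $(y^{(i)}_i,y^{(i)}_j)$, else $0$. Success indicator $s_i:=1$ if $\sum_{j=1}^n u_i(j)\ge n-t$; otherwise $s_i:=0$ and $\boldsymbol w^{(i)}:=\phi$. (c) Send $s_i$ to all; each processor records the indicator received from each $j$ (own for itself) and forms $\mathcal S_1=\{j:s_j=1\}$,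 $\mathcal S_0=\{j:s_j=0\}$ (views may differ between processors). Phase 2. If $s_i=1$: set $u_i(j):=0$ for all $j\in\mathcal S_0$; if now $\sum_j u_i(j)<n-t$, set $s_i:=0$, $\boldsymbol w^{(i)}:=\phi$ and send $s_i=0$ to all. Everyone overwrites recorded indicators with newly received ones and recomputes $\mathcal S_0,\mathcal S_1$. Phase 3 begins by repeating the steps of Phase 2 once more (followed by a vote and binary agreement, irrelevant here). Notation. For $p\in\{1,2,3\}$, $s^{[p]}_i$ is the value of honest processor $i$'s success indicator at the end of (the indicator-updating steps of) Phase $p$, and $\eta^{[p]}$ is the number of distinct values in $\{\boldsymbol w_i: i\text{ honest},\ s^{[p]}_i=1\}$ (initial messages). *)

(* Defs.v *)
From HB Require Import structures.
From mathcomp Require Import all_boot all_order all_algebra all_field.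
Unset Printing Implicit Defensive.
Import GRing.Theory.
Local Open Scope ring_scope.

(* Processors [1:n] are represented by 'I_n (processor i : 'I_n is the
   integer i+1).  Code dimension k = floor(t/5)+1. *)
Definition cool_k (t : nat) : nat := (t %/ 5 + 1)%N.

(* c = ceil(max{l, (t/5+1) log2(n+1)} / k), i.e. the least c with
   c*k >= l and c*k >= (t/5+1) log2(n+1); the latter is equivalent to
   (n+1)^(t+5) <= 2^(5ck). *)
Definition is_cool_c (n t l c : nat) : Prop :=
  [/\ (l <= c * cool_k t)%N,
      ((n.+1) ^ (t + 5) <= 2 ^ (5 * (c * cool_k t)))%N
    & forall c', (l <= c' * cool_k t)%N ->
        ((n.+1) ^ (t + 5) <= 2 ^ (5 * (c' * cool_k t)))%N -> (c <= c')%N].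

Section COOL.
Variables (n t l c : nat) (F : finFieldType).
(* alpha m : the field element identified with the integer m in [1:n] *)
Variable alpha : nat -> F.
(* beta : the field element of GF(2^c) represented by a c-bit string *)
Variable beta : c.-tuple bool -> F.

Local Notation k := (cool_k t).

Definition hcoef (i : nat) (j : 'I_k) : F :=
  \prod_(p < k | p != j) ((alpha i - alpha p.+1) / (alpha j.+1 - alpha p.+1)).

(* zero-padding to kc bits, split into k blocks of c bits *)
Definition encode (w : l.-tuple bool) (j : 'I_k) : F :=
  beta [tuple nth false w (j * c + q) | q < c].

Definition ycode (w : l.-tuple bool) (j : 'I_n) : F :=
  \sum_(p < k) hcoef j.+1 p * encode w p.

(* An execution: honest set H, initial messages w, and the adversary's
   choices of what each dishonest processor j sends to each processor i. *)
Variables (H : {set 'I_n}) (w : 'I_n -> l.-tuple bool).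
Variable adv1 : 'I_n -> 'I_n -> F * F.     (* Phase 1(a): pair j sends to i *)
Variable advs1 : 'I_n -> 'I_n -> bool.     (* Phase 1(c): indicator j sends to i *)
Variable adv2 : 'I_n -> 'I_n -> option bool. (* Phase 2: None = nothing sent *)

Definition recv1 (i j : 'I_n) : F * F :=
  if j \in H then (ycode (w j) i, ycode (w j) j) else adv1 j i.

Definition u1 (i j : 'I_n) : bool :=
  (j == i) || (recv1 i j == (ycode (w i) i, ycode (w i) j)).

Definition s1 (i : 'I_n) : bool := (n - t <= #|[set j | u1 i j]|)%N.

Definition view1 (i j : 'I_n) : bool :=
  if j == i then s1 i else if j \in H then s1 j else advs1 j i.

Definition u2 (i j : 'I_n) : bool := u1 i j && (~~ s1 i || view1 i j).
Definition s2 (i : 'I_n) : bool := s1 i && (n - t <= #|[set j | u2 i j]|)%N.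

Definition msg2 (j i : 'I_n) : option bool :=
  if j \in H then (if s1 j && ~~ s2 j then Some false else None) else adv2 j i.

Definition view2 (i j : 'I_n) : bool :=
  if j == i then s2 i else if msg2 j i is Some b then b else view1 i j.

Definition u3 (i j : 'I_n) : bool := u2 i j && (~~ s2 i || view2 i j).
Definition s3 (i : 'I_n) : bool := s2 i && (n - t <= #|[set j | u3 i j]|)%N.

Definition cool_eta (s : 'I_n -> bool) : nat := #|[set w i | i in H & s i]|.

End COOL.

(* Main.v *)
Require Import Defs.
From HB Require Import structures.
From mathcomp Require Import all_boot all_order all_algebra all_field.
From mathcomp Require Import zify.
Import GRing.Theory.
Local Open Scope ring_scope.

Lemma encode_inj (t l c : nat) (F : finFieldType) (beta : c.-tuple bool -> F)
  (a b : l.-tuple bool) :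
  (l <= c * cool_k t)%N -> injective beta ->
  (forall p, encode t l c F beta a p = encode t l c F beta b p) -> a = b.
Proof.
move=> hl bi he; apply: eq_from_tnth => r.
have hr : (r < l)%N := ltn_ord r.
have c0 : (0 < c)%N.
  have : (0 < c * cool_k t)%N by lia.
  by rewrite muln_gt0 => /andP[].
have hq : (r %/ c < cool_k t)%N by rewrite ltn_divLR //; move: hr hl; rewrite mulnC; lia.
have := he (Ordinal hq); rewrite /encode => /bi /(congr1 (fun s : c.-tuple bool => tnth s (Ordinal (ltn_pmod r c0)))).
by rewrite !tnth_mktuple /= -divn_eq !(tnth_nth false).
Qed.

Lemma Zsmall (n t l c : nat) (F : finFieldType) (alpha : nat -> F)
  (beta : c.-tuple bool -> F) (a b : l.-tuple bool) :
  (cool_k t <= n)%N -> (l <= c * cool_k t)%N ->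
  {in [pred m | (0 < m <= n)%N] &, injective alpha} -> injective beta -> a != b ->
  (#|[set m : 'I_n | ycode n t l c F alpha beta a m == ycode n t l c F alpha beta b m]|
     < cool_k t)%N.
Proof.
move=> hkn hl ainj binj ab.
set k := cool_k t.
have ainjk : forall p q : 'I_k, alpha p.+1 = alpha q.+1 -> p = q.
  move=> p q /ainj; rewrite !inE => h; apply/val_inj/eq_add_S/h.
    by have := ltn_ord p; lia.
  by have := ltn_ord q; lia.
pose L (p : 'I_k) : {poly F} :=
  (\prod_(q < k | q != p) (alpha p.+1 - alpha q.+1)^-1) *:
     \prod_(q < k | q != p) ('X - (alpha q.+1)%:P).
have evL : forall p x, (L p).[x] =
    \prod_(q < k | q != p) ((x - alpha q.+1) / (alpha p.+1 - alpha q.+1)).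
  move=> p x; rewrite hornerZ horner_prod.
  under eq_bigr do rewrite hornerXsubC.
  by rewrite -big_split /=; apply: eq_bigr => q _; rewrite mulrC.
have sizeL : forall p, (size (L p) <= k)%N.
  move=> p; apply: leq_trans (size_scale_leq _ _) _.
  rewrite size_prod; last by move=> q _; rewrite polyXsubC_eq0.
  under eq_bigr do rewrite size_XsubC.
  rewrite sum_nat_const.
  rewrite -[2%R]/2%N cardC1 card_ord; have k0 : (0 < k)%N by rewrite /k /cool_k addn1.
  lia.
have nodeL : forall p q : 'I_k, (L p).[alpha q.+1] = (p == q)%:R.
  move=> p q; rewrite evL; case: eqP => [<-|/eqP pq].
    apply: big1 => r rp; rewrite divff // subr_eq0; apply/eqP => /ainjk e.
    by move: rp; rewrite e eqxx.
  rewrite (bigD1 q) /=; last by rewrite eq_sym.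
  by rewrite subrr mul0r mul0r.
pose D := \sum_(p < k) (encode t l c F beta a p - encode t l c F beta b p) *: L p.
have evD : forall x, D.[x] = \sum_(p < k)
   (encode t l c F beta a p - encode t l c F beta b p) * (L p).[x].
  by move=> x; rewrite horner_sum; apply: eq_bigr => p _; rewrite hornerZ.
have ycD : forall m : 'I_n, ycode n t l c F alpha beta a m -
   ycode n t l c F alpha beta b m = D.[alpha m.+1].
  move=> m; rewrite evD /ycode -sumrB; apply: eq_bigr => p _.
  by rewrite evL /hcoef -mulrBr mulrC.
have sizeD : (size D <= k)%N.
  apply: leq_trans (size_sum _ _ _) _; apply/bigmax_leqP => p _.
  exact: leq_trans (size_scale_leq _ _) (sizeL p).
have D0 : D != 0.
  apply/eqP => D0; move/eqP: ab; apply; apply: (encode_inj _ _ _ _ _ _ _ hl binj) => q.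
  apply/eqP; rewrite -subr_eq0.
  have : D.[alpha q.+1] = 0 by rewrite D0 horner0.
  rewrite evD (bigD1 q) //= nodeL eqxx mulr1 big1 ?addr0; first by move=> ->.
  by move=> p pq; rewrite nodeL (negPf pq) mulr0.
set Z := [set m | _].
have := max_poly_roots D0 (rs := [seq alpha (val m).+1 | m <- enum Z]).
rewrite size_map -cardE => h; apply: leq_trans (h _ _) sizeD.
  apply/allP => x /mapP [m]; rewrite mem_enum inE => /eqP e ->.
  by rewrite /root -ycD e subrr.
rewrite map_inj_in_uniq ?enum_uniq // => m m' _ _ /ainj; rewrite !inE => h'.
apply/val_inj/eq_add_S/h'; exact: ltn_ord.
Qed.

Local Close Scope ring_scope.

Theorem lemma10 (n t l c : nat) (F : finFieldType)
  (alpha : nat -> F) (beta : c.-tuple bool -> F)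
  (H : {set 'I_n}) (w : 'I_n -> l.-tuple bool)
  (adv1 : 'I_n -> 'I_n -> F * F) (advs1 : 'I_n -> 'I_n -> bool)
  (adv2 : 'I_n -> 'I_n -> option bool) :
  (3 * t + 1 <= n)%N ->
  is_cool_c n t l c ->
  #|F| = (2 ^ c)%N ->
  {in [pred m | (0 < m <= n)%N] &, injective alpha} ->
  (forall m, (0 < m <= n)%N -> alpha m != 0%R) ->
  bijective beta ->
  (#|~: H| <= t)%N ->
  cool_eta n l H w (s1 n t l c F alpha beta H w adv1) = 2%N ->
  (cool_eta n l H w (s3 n t l c F alpha beta H w adv1 advs1 adv2) <= 1)%N.
Proof.
move=> hn [hl _ _] _ ainj _ [beta' bK _] hd heta1.
have binj : injective beta := can_inj bK.
set y := ycode n t l c F alpha beta.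
set U1 := u1 n t l c F alpha beta H w adv1.
set S1 := s1 n t l c F alpha beta H w adv1 in heta1 *.
set S2 := s2 n t l c F alpha beta H w adv1 advs1.
set S3 := s3 n t l c F alpha beta H w adv1 advs1 adv2.
set d := #|~: H| in hd *.
have cH : #|H| = (n - d)%N by have := cardsC H; rewrite card_ord -/d; lia.
have kt : (cool_k t <= t.+1)%N by rewrite /cool_k addn1 ltnS leq_div.
have S32 : forall i, S3 i -> S2 i by move=> i /andP[].
have S21 : forall i, S2 i -> S1 i by move=> i /andP[].
have PU1 : forall i j, i \in H -> j \in H -> U1 i j -> w i != w j ->
    (y (w i) i == y (w j) i) && (y (w i) j == y (w j) j).
  move=> i j iH jH; rewrite /U1 /u1 /recv1 jH /= -/y => /orP[/eqP -> | ]; first by rewrite eqxx.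
  by rewrite xpair_eqE => /andP[/eqP -> /eqP ->] _; rewrite !eqxx.
have P2 : forall i, S2 i -> (n - t <= d + #|[set j in H | U1 i j && S1 j]|)%N.
  move=> i /andP[s1i hc]; apply: leq_trans hc _.
  apply: leq_trans (leq_card_setU (~: H) _).
  apply: subset_leq_card; apply/subsetP => j; rewrite !inE /U1 /S1.
  case jH: (j \in H) => //=; rewrite /u2 => /andP[-> h]; move: h.
  rewrite s1i /= /view1 jH; by case: eqP => [-> | _].
have P3 : forall i, S3 i -> (n - t <= d + #|[set j in H | U1 i j && S2 j]|)%N.
  move=> i /andP[s2i hc]; apply: leq_trans hc _.
  apply: leq_trans (leq_card_setU (~: H) _).
  apply: subset_leq_card; apply/subsetP => j; rewrite !inE /U1 /S2.
  case jH: (j \in H) => //=; rewrite /u3 s2i /= /view2.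
  case: eqP => [-> | ji].
    by rewrite /u2 => /andP[/andP[-> _] ->].
  rewrite /msg2 jH /u2.
  case e: (s1 n t l c F alpha beta H w adv1 j && ~~ s2 n t l c F alpha beta H w adv1 advs1 j) => /=; first by rewrite andbF.
  rewrite /view1 (introF eqP ji) jH => /andP[/andP[-> _] s1j].
  by move: e; rewrite s1j /=; case: (s2 _ _ _ _ _ _ _ _ _ _ _ j).
rewrite leqNgt; apply/negP => /card_gt1P [x [x' [/imsetP [i0 + ->] /imsetP [j0 + ->] ab]]].
rewrite !inE => /andP[i0H s3i0] /andP[j0H s3j0].
set a := w i0 in ab *; set b := w j0 in ab *.
have Hab : forall m, m \in H -> S1 m -> w m = a \/ w m = b.
  move=> m mH s1m; case: (eqVneq (w m) a) => [|ma]; first by left.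
  case: (eqVneq (w m) b) => [|mb]; first by right.
  have : (2 < cool_eta n l H w S1)%N.
    apply/card_gt2P; exists a, b, (w m); split; last by split; rewrite // eq_sym.
    split; apply/imsetP.
    - by exists i0 => //; rewrite inE i0H S21 ?S32.
    - by exists j0 => //; rewrite inE j0H S21 ?S32.
    - by exists m => //; rewrite inE mH s1m.
  by rewrite heta1.
have kn : (cool_k t <= n)%N by lia.
have caseZ : forall (z1 z2 : l.-tuple bool) (i : 'I_n), i \in H -> S3 i -> w i = z1 ->
    z1 != z2 -> (forall m, m \in H -> S1 m -> w m = z1 \/ w m = z2) ->
    (forall m, m \in H -> S2 m -> w m = z1 -> y z1 m == y z2 m) -> False.
  move=> z1 z2 i iH s3i wi xx' Hx hZ.
  have := Zsmall n t l c F alpha beta z1 z2 kn hl ainj binj xx'.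
  have := P3 i s3i.
  suff : ([set j in H | U1 i j && S2 j] \subset [set m | y z1 m == y z2 m]).
    move/subset_leq_card; rewrite -/y => h1 h2 h3; move: hd kt hn h1 h2 h3; clear; move: (#|[set j in H | _]|) => X; move: (#|[set m | _]|) => Z; move: (cool_k t) => K. lia.
  apply/subsetP => j; rewrite !inE => /andP[jH /andP[u s2j]].
  case: (Hx j jH (S21 j s2j)) => wj; first exact: hZ.
  have := PU1 i j iH jH u; rewrite wi wj xx' => /(_ isT) /andP[_].
  done.
have caseN : forall (z1 z2 : l.-tuple bool) (m : 'I_n), m \in H -> S2 m -> w m = z1 ->
    z1 != z2 -> (forall m, m \in H -> S1 m -> w m = z1 \/ w m = z2) ->
    y z1 m != y z2 m -> (n - t <= d + #|[set j in H | w j == z1]|)%N.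
  move=> z1 z2 m mH s2m wm xx' Hx nZ.
  apply: leq_trans (P2 m s2m) _; rewrite leq_add2l.
  apply: subset_leq_card; apply/subsetP => j; rewrite !inE => /andP[jH /andP[u s1j]].
  rewrite jH /=; case: (Hx j jH s1j) => wj; first by rewrite wj.
  have := PU1 m j mH jH u; rewrite wm wj xx' => /(_ isT) /andP[e _].
  by rewrite e in nZ.
have Hba : forall m, m \in H -> S1 m -> w m = b \/ w m = a.
  by move=> m mH s1m; case: (Hab m mH s1m); [right | left].
have ba : b != a by rewrite eq_sym.
case: (boolP [exists m, [&& m \in H, S2 m, w m == a & y a m != y b m]]) => [/existsP [m /and4P [mH s2m /eqP wm nZ]] | hA]; last first.
  apply: (caseZ a b i0 i0H s3i0 erefl ab Hab) => m mH s2m wm.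
  by move/existsPn: hA => /(_ m); rewrite mH s2m wm eqxx /= negbK.
case: (boolP [exists m, [&& m \in H, S2 m, w m == b & y b m != y a m]]) => [/existsP [m' /and4P [mH' s2m' /eqP wm' nZ']] | hB]; last first.
  apply: (caseZ b a j0 j0H s3j0 erefl ba Hba) => m0 mH0 s2m0 wm0.
  by move/existsPn: hB => /(_ m0); rewrite mH0 s2m0 wm0 eqxx /= negbK.
have h1 := caseN a b m mH s2m wm ab Hab nZ.
have h2 := caseN b a m' mH' s2m' wm' ba Hba nZ'.
have : (#|[set j in H | w j == a]| + #|[set j in H | w j == b]| <= n - d)%N.
  rewrite -cH -cardsUI.
  have -> : [set j in H | w j == a] :&: [set j in H | w j == b] = set0.
    apply/setP => j; rewrite !inE; case: (w j =P a) => [->|]; last by rewrite andbF.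
    by rewrite (negPf ab) !andbF.
  rewrite cards0 addn0; apply: subset_leq_card; apply/subsetP => j.
  by rewrite !inE => /orP[] /andP[].
lia.
Qed.
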